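(* For $m\in\mathbb{Z}$ let $(\mathbf 1-\mathbf x)^{(\star m)}$ denote the $m$-fold convolution $(\mathbf 1-\mathbf x)\star\cdots\star(\mathbf 1-\mathbf x)$ if $m\ge0$ (the empty convolution being $\mathbf 1$), and the $(-m)$-fold convolution $q\star\cdots\star q$ of the $\star$-inverse $q$ of $\mathbf 1-\mathbf x$ if $m<0$. Then the map $\mathbb{Z}\to C(\mathbb{Z}_p,\mathbb{C}_p)$, $m\mapsto(\mathbf 1-\mathbf x)^{(\star m)}$, has a unique extension to a continuous map $\mathbb{Z}_p\to C(\mathbb{Z}_p,\mathbb{C}_p)$, and this extension is $y\mapsto S^y(\mathbf 1)$.
   Context: Fix a prime $p$. $\mathbb{C}_p$ denotes the completion of an algebraic closure of $\mathbb{Q}_p$, with absolute value $|\cdot|$ normalized by $|p|=1/p$. $C(\mathbb{Z}_p,\mathbb{C}_p)$ is the $\mathbb{C}_p$-Banach space of continuous functions $\mathbb{Z}_p\to\mathbb{C}_p$ with the sup-norm. For $n\in\mathbb{Z}_{\ge0}$ and $x\in\mathbb{Z}_p$, $\binom{x}{n}=x(x-1)\cdots(x-n+1)/n!$. For $\phi$ let $(\nabla\phi)(x)=\phi(x+1)-\phi(x)$; every $\phi$ has Mahler expansion $\phi(x)=\sum_{n\ge0}(\nabla^n\phi)(0)\binom xn$. Define $P(\phi)=\sum_{n\ge0}(\nabla^n\phi)(0)\,t^n/n!$. The convolution $\phi\star\psi$ is the continuous function with Mahler coefficients $(\nabla^n(\phi\star\psi))(0)=\sum_{k=0}^n\binom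 nk(\nabla^k\phi)(0)(\nabla^{n-k}\psi)(0)$, so $P(\phi\star\psi)=P(\phi)P(\psi)$; $\mathbf 1$ is the constant function $1$ (the unit for $\star$) and $\mathbf x$ is $x\mapsto x$, so $P(\mathbf 1-\mathbf x)=1-t$ and $\mathbf 1-\mathbf x$ is $\star$-invertible. For $y\in\mathbb{Z}_p$, $S^y(\phi)(x)=\sum_{k\ge0}(-1)^k k!\binom yk\binom xk\phi(x-k)$. *)

(* Defs.v *)
From Stdlib Require ClassicalEpsilon.
From mathcomp Require Import all_boot all_order all_algebra.
From mathcomp Require Import reals.
Set Implicit Arguments. Unset Strict Implicit. Unset Printing Implicit Defensive.
Import Order.TTheory GRing.Theory Num.Theory.
Local Open Scope ring_scope.

Section PadicDefs.
Variables (R : realType) (K : fieldType) (v : K -> R).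

Definition is_abs : Prop :=
  [/\ forall x, 0 <= v x, forall x, v x = 0 <-> x = 0 &
      forall x y, v (x * y) = v x * v y].
Definition nonarch : Prop := forall x y, v (x + y) <= Num.max (v x) (v y).
Definition cauchy (a : nat -> K) : Prop :=
  forall e, 0 < e -> exists N, forall m n, (N <= m)%N -> (N <= n)%N -> v (a m - a n) < e.
Definition cvg_to (a : nat -> K) (l : K) : Prop :=
  forall e, 0 < e -> exists N, forall n, (N <= n)%N -> v (a n - l) < e.
Definition complete : Prop := forall a, cauchy a -> exists l, cvg_to a l.
Definition alg_dense : Prop :=
  forall x e, 0 < e -> exists y,
    (exists P : {poly rat}, P != 0 /\ root (map_poly ratr P) y) /\ v (x - y) < e.

(* Z_p realized as the closure of Z inside K *)
Definition isZp (x : K) : Prop :=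
  forall e, 0 < e -> exists z : int, v (x - z%:~R) < e.

Definition has_sum (a : nat -> K) (s : K) : Prop :=
  cvg_to (fun n => \sum_(k < n) a k) s.
Definition ksum (a : nat -> K) : K := ClassicalEpsilon.epsilon (inhabits 0) (fun s => has_sum a s).

Definition binom (x : K) (n : nat) : K :=
  (\prod_(i < n) (x - i%:R)) / n`!%:R.

(* functions Z_p -> K are represented by functions K -> K, only their
   values on Z_p matter *)
Definition contZp (f : K -> K) : Prop :=
  forall x e, isZp x -> 0 < e -> exists2 d, 0 < d &
    forall y, isZp y -> v (y - x) < d -> v (f y - f x) < e.
(* continuity of a map Z_p -> C(Z_p, K) for the sup norm *)
Definition contmap (F : K -> K -> K) : Prop :=
  forall y0 e, isZp y0 -> 0 < e -> exists2 d, 0 < d &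
    forall y, isZp y -> v (y - y0) < d ->
      forall x, isZp x -> v (F y x - F y0 x) <= e.

Definition mcoef (phi : K -> K) (n : nat) : K :=
  \sum_(k < n.+1) (-1) ^+ (n - k) * 'C(n, k)%:R * phi k%:R.
Definition mahler_fun (c : nat -> K) (x : K) : K := ksum (fun n => c n * binom x n).
Definition conv (phi psi : K -> K) : K -> K :=
  mahler_fun (fun n => \sum_(k < n.+1) 'C(n, k)%:R * mcoef phi k * mcoef psi (n - k)).

Definition cst_one : K -> K := fun _ => 1.
Definition id_fun : K -> K := fun x => x.
Definition one_minus_x : K -> K := fun x => cst_one x - id_fun x.

Definition star_inv (phi : K -> K) : K -> K :=
  ClassicalEpsilon.epsilon (inhabits cst_one)
    (fun psi => contZp psi /\ forall x, isZp x -> conv phi psi x = cst_one x).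

Definition star_pow (phi : K -> K) (m : int) : K -> K :=
  match m with
  | Posz n => iter n (conv phi) cst_one
  | Negz n => iter n.+1 (conv (star_inv phi)) cst_one
  end.

Definition S_term (y : K) (phi : K -> K) (x : K) (k : nat) : K :=
  (-1) ^+ k * k`!%:R * binom y k * binom x k * phi (x - k%:R).
Definition Sop (y : K) (phi : K -> K) (x : K) : K := ksum (S_term y phi x).

End PadicDefs.

(* Main.v *)
Require Import Defs.
From mathcomp Require Import all_boot all_order all_algebra.
From mathcomp Require Import reals.
From mathcomp Require Import ring lra.
From Stdlib Require Import ClassicalEpsilon FunctionalExtensionality.
Import Order.TTheory GRing.Theory Num.Theory.
Set Implicit Arguments. Unset Strict Implicit. Unset Printing Implicit Defensive.
Local Open Scope ring_scope.

Section Basic.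
Variables (R : realType) (K : closedFieldType) (v : K -> R) (p : nat).
Hypothesis pP : prime p.
Hypothesis av : is_abs v.
Hypothesis na : nonarch v.
Hypothesis vp : v p%:R = (p%:R)^-1.

Lemma v_ge0 x : 0 <= v x. Proof. by case: av => h _ _; apply: h. Qed.
Lemma vM x y : v (x * y) = v x * v y. Proof. by case: av => _ _ h; apply: h. Qed.
Lemma v0 : v 0 = 0. Proof. case: av => _ h _. by apply (proj2 (h 0)). Qed.
Lemma v_eq0 x : v x = 0 -> x = 0. Proof. case: av => _ h _. exact: (proj1 (h x)). Qed.
Lemma v1 : v 1 = 1.
Proof.
have h := vM 1 1; rewrite mulr1 in h.
have nz : v 1 != 0 by apply/eqP => /v_eq0/eqP; rewrite oner_eq0.
by apply: (mulfI nz); rewrite mulr1 -h.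
Qed.
Lemma vN1 : v (-1) = 1.
Proof.
have h := vM (-1) (-1); rewrite mulrNN mulr1 v1 in h.
have h0 := v_ge0 (-1).
have : (v (-1) - 1) * (v (-1) + 1) = 0 by rewrite -subr_sqr expr1n expr2 -h subrr.
move/eqP; rewrite mulf_eq0 => /orP [/eqP|/eqP] e.
  by apply/eqP; rewrite -subr_eq0 e.
have : 0 < v (-1) + 1 by rewrite ltr_wpDl.
by rewrite e ltxx.
Qed.
Lemma vN x : v (- x) = v x.
Proof. by rewrite -mulN1r vM vN1 mul1r. Qed.
Lemma vB x y : v (x - y) = v (y - x).
Proof. by rewrite -vN opprB. Qed.
Lemma vD x y : v (x + y) <= Num.max (v x) (v y). Proof. exact: na. Qed.
Lemma vD_le x y B : v x <= B -> v y <= B -> v (x + y) <= B.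
Proof. move=> h1 h2; apply: le_trans (vD x y) _; by rewrite ge_max h1 h2. Qed.
Lemma vD_lt x y B : v x < B -> v y < B -> v (x + y) < B.
Proof. move=> h1 h2; apply: le_lt_trans (vD x y) _; by rewrite gt_max h1 h2. Qed.
Lemma vX x n : v (x ^+ n) = v x ^+ n.
Proof. elim: n => [|n IH]; first by rewrite !expr0 v1. by rewrite !exprS vM IH. Qed.
Lemma v_sign n : v ((-1) ^+ n) = 1.
Proof. by rewrite vX vN1 expr1n. Qed.
Lemma v_nat n : v n%:R <= 1.
Proof.
elim: n => [|n IH]; first by rewrite v0.
by rewrite -addn1 natrD; apply: vD_le => //; rewrite v1.
Qed.
Lemma v_int (z : int) : v z%:~R <= 1.
Proof. case: z => n; first exact: v_nat. by rewrite NegzE mulrNz vN; exact: v_nat. Qed.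
Lemma vV x : x != 0 -> v (x^-1) = (v x)^-1.
Proof.
move=> nz; have h := vM x x^-1; rewrite mulfV // v1 in h.
have vnz : v x != 0 by apply/eqP => /v_eq0/eqP; rewrite (negPf nz).
by apply: (mulfI vnz); rewrite -h mulfV.
Qed.
Lemma v_lt_eq0 x : (forall e, 0 < e -> v x < e) -> x = 0.
Proof.
move=> h; apply: v_eq0; have := v_ge0 x; rewrite le_eqVlt => /orP [/eqP <- //|].
by move=> /h; rewrite ltxx.
Qed.
Lemma v_le_lt x B : (forall e, 0 < e -> v x <= B + e) -> v x <= B.
Proof.
move=> h; rewrite leNgt; apply/negP => lt.
have := h ((v x - B) / 2%:R); rewrite divr_gt0 ?subr_gt0 // => /(_ isT) h2.
lra.
Qed.

Lemma p_gt1 : (1 < p)%N. Proof. exact: prime_gt1. Qed.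
Lemma vp_lt1 : v p%:R < 1.
Proof. by rewrite vp invf_lt1 ?ltr1n ?p_gt1 // ltr0n prime_gt0. Qed.
Lemma vp_gt0 : 0 < v p%:R.
Proof. by rewrite vp invr_gt0 ltr0n prime_gt0. Qed.

Lemma v_nat_gt0 n : (0 < n)%N -> 0 < v n%:R.
Proof.
elim/ltn_ind: n => n IH n0.
case: (boolP (p %| n)%N) => [/dvdnP [m e]|ndv].
  subst n.
  have m0 : (0 < m)%N by move: n0; rewrite muln_gt0 => /andP [].
  rewrite natrM vM mulr_gt0 ?vp_gt0 //; apply: IH => //.
  by rewrite -[X in (X < _)%N]muln1 ltn_mul2l m0 p_gt1.
have cp : coprime n p by rewrite coprime_sym prime_coprime.
case: (egcdnP p n0) => km kn + _; rewrite (eqP cp) => e.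
have := v_ge0 n%:R; rewrite le_eqVlt => /orP [/eqP h|//].
have hn : n%:R = 0 :> K by apply: v_eq0.
have : (km * n)%:R = (kn * p + 1)%:R :> K by rewrite e.
rewrite !natrM natrD hn mulr0 => /eqP; rewrite eq_sym addr_eq0 => /eqP h2.
have := vp_lt1; have := v_nat kn.
have : v (kn%:R * p%:R) = 1 by rewrite -natrM h2 vN v1.
rewrite vM => h3 h4 h5.
have : v kn%:R * v p%:R < 1.
  have := v_ge0 kn%:R; have := v_ge0 p%:R; nra.
by rewrite h3 ltxx.
Qed.
Lemma natr_neq0 n : (0 < n)%N -> n%:R != 0 :> K.
Proof. move=> /v_nat_gt0 h; apply/eqP => e; by rewrite e v0 ltxx in h. Qed.
Lemma fact_neq0 n : n`!%:R != 0 :> K.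
Proof. exact/natr_neq0/fact_gt0. Qed.


Definition ff (x : K) k := \prod_(i < k) (x - i%:R).
Lemma binomE (x : K) k : binom x k = ff x k / k`!%:R. Proof. by []. Qed.
Lemma ffS (x : K) k : ff x k.+1 = ff x k * (x - k%:R).
Proof. by rewrite /ff big_ord_recr. Qed.
Lemma ff_shift (x : K) k : ff (x + 1) k.+1 = (x + 1) * ff x k.
Proof.
rewrite /ff big_ord_recl /= subr0; congr (_ * _); apply: eq_bigr => i _.
by rewrite /bump /= add1n -natr1; ring.
Qed.
Lemma ff_binom (x : K) k : ff x k = k`!%:R * binom x k.
Proof. by rewrite binomE mulrC divfK ?fact_neq0. Qed.
Lemma binom0 (x : K) : binom x 0 = 1.
Proof. by rewrite binomE /ff big_ord0 fact0 divr1. Qed.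
Lemma binom1 (x : K) : binom x 1 = x.
Proof. by rewrite binomE ffS /ff big_ord0 (_ : 1`! = 1)%N // divr1 mul1r subr0. Qed.
Lemma binom_pascal (x : K) k : binom (x + 1) k.+1 = binom x k.+1 + binom x k.
Proof.
rewrite !binomE ff_shift ffS factS natrM.
have h1 := fact_neq0 k.
have h2 : k.+1%:R != 0 :> K by apply: natr_neq0.
move: h2; rewrite -natr1 => h2.
field. by rewrite h2 h1.
Qed.
Lemma binom_pascalB (y : K) k : binom y k.+1 = binom (y - 1) k.+1 + binom (y - 1) k.
Proof. by rewrite -binom_pascal subrK. Qed.
Lemma ff_nat_big k n : (k < n)%N -> ff k%:R n = 0.
Proof.
elim: n => [//|n IH]; rewrite ltnS leq_eqVlt => /orP [/eqP ->|/IH h].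
  by rewrite ffS subrr mulr0.
by rewrite ffS h mul0r.
Qed.
Lemma binom_nat_big k n : (k < n)%N -> binom (k%:R : K) n = 0.
Proof. by move=> /ff_nat_big h; rewrite binomE h mul0r. Qed.
Lemma binom_neg1 k : binom (-1 : K) k = (-1) ^+ k.
Proof.
elim: k => [|k IH]; first by rewrite binom0 expr0.
have := binom_pascal (-1) k; rewrite addNr (binom_nat_big (k := 0)) // IH.
by move/eqP; rewrite eq_sym addr_eq0 exprS mulN1r => /eqP.
Qed.


Definition mcn (g : nat -> K) n :=
  \sum_(k < n.+1) (-1) ^+ (n - k) * 'C(n, k)%:R * g k.
Lemma mcoefE (f : K -> K) n : mcoef f n = mcn (fun k => f k%:R) n.
Proof. by []. Qed.
Lemma mcnB g h n : mcn (fun k => g k - h k) n = mcn g n - mcn h n.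
Proof. by rewrite /mcn -sumrB; apply: eq_bigr => i _; ring. Qed.
Lemma mcnS g n : mcn g n.+1 = mcn (fun k => g k.+1) n - mcn g n.
Proof.
set S2 := \sum_(i < n.+1) (-1) ^+ (n - i) * 'C(n, i.+1)%:R * g i.+1.
set T := \sum_(i < n) (-1) ^+ (n - i.+1) * 'C(n, i.+1)%:R * g i.+1.
have L : mcn g n.+1 = (-1) ^+ n.+1 * g 0%N + mcn (fun k => g k.+1) n + S2.
  rewrite /mcn big_ord_recl /= subn0 bin0 mulr1 -addrA; congr (_ + _).
  rewrite /S2 -big_split /=; apply: eq_bigr => i _.
  by rewrite /bump /= add1n subSS binS natrD; ring.
have M : mcn g n = (-1) ^+ n * g 0%N + T.
  rewrite /mcn big_ord_recl /= subn0 bin0 mulr1; congr (_ + _).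
have S2T : S2 = - T.
  rewrite /S2 big_ord_recr /= bin_small // mulr0 mul0r addr0.
  rewrite /T -sumrN; apply: eq_bigr => i _.
  have -> : (n - i = (n - i.+1).+1)%N by rewrite subnSK.
  by rewrite exprS; ring.
rewrite L M S2T exprS; ring.
Qed.
Definition Fsum (c : nat -> K) k := \sum_(i < k.+1) c i * binom (k%:R : K) i.
Lemma FsumS c k : Fsum c k.+1 - Fsum c k = Fsum (fun i => c i.+1) k.
Proof.
set U := \sum_(i < k) c i.+1 * binom (k%:R : K) i.+1.
have L : Fsum c k.+1 = c 0%N + U + Fsum (fun i => c i.+1) k.
  rewrite /Fsum big_ord_recl /= binom0 mulr1 -addrA; congr (_ + _).
  under eq_bigr => i _ do rewrite /bump /= add1n -natr1 binom_pascal mulrDr.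
  by rewrite big_split /= big_ord_recr /= binom_nat_big // mulr0 addr0.
have M : Fsum c k = c 0%N + U.
  by rewrite /Fsum big_ord_recl /= binom0 mulr1.
rewrite L M; ring.
Qed.
Lemma mcn_inv c n : mcn (Fsum c) n = c n.
Proof.
elim: n c => [|n IH] c.
  by rewrite /mcn big_ord1 /= /Fsum big_ord1 binom0 expr0 bin0 !mul1r mulr1.
rewrite mcnS -mcnB.
rewrite -(IH (fun i => c i.+1)) /mcn; apply: eq_bigr => i _; by rewrite FsumS.
Qed.


Definition cc (y : K) n := (-1) ^+ n * n`!%:R * binom y n.
Definition m1x (n : nat) : K := if n == 0%N then 1 else if n == 1%N then -1 else 0.
Definition dd (a b : nat -> K) n := \sum_(k < n.+1) 'C(n, k)%:R * a k * b (n - k)%N.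

Lemma dd_m1x0 b : dd m1x b 0 = b 0%N.
Proof. by rewrite /dd big_ord1 /= bin0 /m1x /= !mul1r. Qed.
Lemma dd_m1xS b n : dd m1x b n.+1 = b n.+1 - n.+1%:R * b n.
Proof.
rewrite /dd big_ord_recl big_ord_recl /= big1 ?addr0.
  by rewrite bin0 bin1 subn0 subn1 /= /m1x /=; ring.
by move=> i _; rewrite /m1x /bump /=; ring.
Qed.
Lemma Rec1 y n : dd m1x (cc y) n = cc (y + 1) n.
Proof.
case: n => [|n]; first by rewrite dd_m1x0 /cc !binom0.
rewrite dd_m1xS /cc binom_pascal factS natrM exprS; ring.
Qed.
Lemma altsum (y : K) k : \sum_(i < k.+1) (-1) ^+ i * binom y i = (-1) ^+ k * binom (y - 1) k.
Proof.
elim: k => [|k IH]; first by rewrite big_ord1 /= !binom0.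
rewrite big_ord_recr /= IH binom_pascalB exprS; ring.
Qed.
Lemma Rec2 y n : dd (cc (-1)) (cc y) n = cc (y - 1) n.
Proof.
rewrite /dd.
have E : forall k : 'I_n.+1, 'C(n, k)%:R * cc (-1) k * cc y (n - k)
   = n`!%:R * ((-1) ^+ (n - k) * binom y (n - k)) :> K.
  move=> k; have kn : (k <= n)%N by rewrite -ltnS.
  rewrite /cc binom_neg1 -(bin_fact kn) !natrM.
  have -> : ((-1) ^+ k * k`!%:R * (-1) ^+ k : K) = k`!%:R * ((-1) ^+ k * (-1) ^+ k) by ring.
  rewrite -exprD -signr_odd oddD addbb expr0; ring.
rewrite (eq_bigr _ (fun k _ => E k)) -mulr_sumr.
rewrite (reindex_inj rev_ord_inj) /=.
rewrite (eq_bigr (fun j : 'I_n.+1 => (-1) ^+ j * binom y j)); last first.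
  by move=> j _; rewrite subSS subKn // -ltnS.
by rewrite altsum /cc; ring.
Qed.


Lemma has_sum_unique (a : nat -> K) s t : has_sum v a s -> has_sum v a t -> s = t.
Proof.
move=> hs ht; apply/eqP; rewrite -subr_eq0; apply/eqP; apply: v_lt_eq0 => e e0.
have [N1 h1] := hs e e0; have [N2 h2] := ht e e0.
set S := \sum_(k < maxn N1 N2) a k.
have -> : s - t = (S - t) - (S - s) by ring.
apply: vD_lt; first by apply: h2; rewrite leq_maxr.
by rewrite vN; apply: h1; rewrite leq_maxl.
Qed.
Lemma ksum_eq (a : nat -> K) s : has_sum v a s -> ksum v a = s.
Proof.
move=> h; apply: (has_sum_unique (a := a)) => //.
by apply: epsilon_spec; exists s.
Qed.
Lemma ksum_has (a : nat -> K) : (exists s, has_sum v a s) -> has_sum v a (ksum v a).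
Proof. by move=> h; apply: epsilon_spec. Qed.
Lemma ksum_fin (a : nat -> K) N :
  (forall k, (N <= k)%N -> a k = 0) -> ksum v a = \sum_(k < N) a k.
Proof.
move=> h; apply: ksum_eq => e e0; exists N => n Nn.
have E : forall m, \sum_(k < N + m) a k = \sum_(k < N) a k.
  elim=> [|m IH]; first by rewrite addn0.
  by rewrite addnS big_ord_recr /= IH h ?leq_addr // addr0.
by rewrite -(subnKC Nn) E subrr v0.
Qed.
Lemma has_sumB (a b : nat -> K) s t : has_sum v a s -> has_sum v b t ->
  has_sum v (fun k => a k - b k) (s - t).
Proof.
move=> ha hb e e0; have [N1 h1] := ha e e0; have [N2 h2] := hb e e0.
exists (maxn N1 N2) => n hn; rewrite sumrB.
have -> : \sum_(i < n) a i - \sum_(i < n) b i - (s - t) =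
  (\sum_(i < n) a i - s) + (- (\sum_(i < n) b i - t)) by ring.
apply: vD_lt; first by apply: h1; apply: leq_trans hn; rewrite leq_maxl.
by rewrite vN; apply: h2; apply: leq_trans hn; rewrite leq_maxr.
Qed.
Lemma sum_le (a : nat -> K) n B : 0 <= B -> (forall k, v (a k) <= B) ->
  v (\sum_(k < n) a k) <= B.
Proof.
move=> B0 h; elim: n => [|n IH]; first by rewrite big_ord0 v0.
by rewrite big_ord_recr /=; apply: vD_le.
Qed.
Lemma has_sum_le (a : nat -> K) s B : has_sum v a s -> (forall k, v (a k) <= B) ->
  v s <= B.
Proof.
move=> hs h; have B0 : 0 <= B by apply: le_trans (h 0%N); apply: v_ge0.
apply: v_le_lt => e e0; have [N hN] := hs e e0.
have -> : s = \sum_(k < N) a k + (- (\sum_(k < N) a k - s)) by ring.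
apply: vD_le; first by apply: le_trans (sum_le N B0 h) _; rewrite lerDl ltW.
by rewrite vN; apply: ltW; apply: lt_le_trans (hN N (leqnn N)) _; rewrite lerDr.
Qed.
Lemma sum_nat_lt (a : nat -> K) m n e : 0 < e ->
  (forall k, (m <= k)%N -> v (a k) < e) -> v (\sum_(m <= k < n) a k) < e.
Proof.
move=> e0 h; rewrite big_nat_cond.
apply: (big_ind (fun x => v x < e)); first by rewrite v0.
  by move=> x y; apply: vD_lt.
by move=> i /andP [/andP [mi _] _]; apply: h.
Qed.
Lemma conv_crit (a : nat -> K) : complete v ->
  (forall e, 0 < e -> exists N, forall k, (N <= k)%N -> v (a k) < e) ->
  exists s, has_sum v a s.
Proof.
move=> cpl h; apply: cpl => e e0; have [N hN] := h e e0; exists N => m n Nm Nn.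
have key : forall m n, (N <= n)%N -> (n <= m)%N ->
    v (\sum_(k < m) a k - \sum_(k < n) a k) < e.
  move=> m' n' Nn' nm.
  rewrite -!(big_mkord xpredT) (big_cat_nat (leq0n n') nm) /= addrC addrK.
  by apply: sum_nat_lt => // k hk; apply: hN; apply: leq_trans hk.
case: (leqP n m) => nm; first exact: key.
by rewrite vB; apply: key => //; apply: ltnW.
Qed.


Lemma isZp_int (z : int) : isZp v (z%:~R : K).
Proof. by move=> e e0; exists z; rewrite subrr v0. Qed.
Lemma isZp_le1 (x : K) : isZp v x -> v x <= 1.
Proof.
move=> h; have [z hz] := h 1 ltr01.
have -> : x = (x - z%:~R) + z%:~R by ring.
by apply: vD_le; [apply: ltW | apply: v_int].
Qed.
Lemma v_sub_nat (x : K) i : v x <= 1 -> v (x - i%:R) <= 1.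
Proof. by move=> h; apply: vD_le => //; rewrite vN; apply: v_nat. Qed.
Lemma ff_le1 (x : K) k : v x <= 1 -> v (ff x k) <= 1.
Proof.
move=> h; elim: k => [|k IH]; first by rewrite /ff big_ord0 v1.
rewrite ffS vM; have := v_sub_nat k h; have := v_ge0 (ff x k);
have := v_ge0 (x - k%:R); nra.
Qed.
Lemma ff_lip (x y : K) k : v x <= 1 -> v y <= 1 -> v (ff x k - ff y k) <= v (x - y).
Proof.
move=> hx hy; elim: k => [|k IH]; first by rewrite /ff !big_ord0 subrr v0 v_ge0.
rewrite !ffS.
have -> : ff x k * (x - k%:R) - ff y k * (y - k%:R)
   = ff x k * (x - y) + (ff x k - ff y k) * (y - k%:R) by ring.
apply: vD_le; rewrite vM.
  have := ff_le1 k hx; have := v_ge0 (ff x k); have := v_ge0 (x - y); nra.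
have := v_sub_nat k hy; have := v_ge0 (y - k%:R); have := v_ge0 (ff x k - ff y k).
have := v_ge0 (x - y); nra.
Qed.
Lemma binom_zero_le1 k : v (binom (0 : K) k) <= 1.
Proof.
case: k => [|k]; first by rewrite binom0 v1.
by rewrite (binom_nat_big (k := 0)) // v0 ler01.
Qed.
Lemma binom_nat_le1 n k : v (binom (n%:R : K) k) <= 1.
Proof.
elim: n k => [|n IH] k; first exact: binom_zero_le1.
case: k => [|k]; first by rewrite binom0 v1.
by rewrite -natr1 binom_pascal; apply: vD_le.
Qed.
Lemma binom_negnat_le1 n k : v (binom (- n%:R : K) k) <= 1.
Proof.
elim: n k => [|n IH] k; first by rewrite oppr0; exact: binom_zero_le1.
elim: k => [|k IHk]; first by rewrite binom0 v1.
have := binom_pascalB (- n%:R) k.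
rewrite (_ : - n%:R - 1 = - n.+1%:R :> K); last by rewrite -natr1; ring.
move/eqP; rewrite -subr_eq => /eqP <-.
by apply: vD_le; rewrite ?vN.
Qed.
Lemma binom_int_le1 (z : int) k : v (binom (z%:~R : K) k) <= 1.
Proof. case: z => n; first exact: binom_nat_le1. rewrite NegzE mulrNz; exact: binom_negnat_le1. Qed.
Lemma v_fact_gt0 k : 0 < v (k`!%:R : K).
Proof. exact/v_nat_gt0/fact_gt0. Qed.
Lemma binom_Zp_le1 (x : K) k : isZp v x -> v (binom x k) <= 1.
Proof.
move=> hx; have [z hz] := hx _ (v_fact_gt0 k).
have -> : binom x k = (ff x k - ff (z%:~R) k) * (k`!%:R)^-1 + binom (z%:~R) k.
  by rewrite !binomE; ring.
apply: vD_le; last exact: binom_int_le1.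
rewrite vM vV ?fact_neq0 //.
have := ff_lip k (isZp_le1 hx) (v_int z).
have := v_fact_gt0 k => f0 h.
rewrite ler_pdivrMr // mul1r; apply: ltW; apply: le_lt_trans h hz.
Qed.

Lemma v_fact_bound n : v (n`!%:R : K) <= v p%:R ^+ (n %/ p).
Proof.
have p0 : (0 < p)%N by apply: prime_gt0.
elim: n => [|n IH]; first by rewrite div0n expr0 v1.
rewrite factS natrM vM divnS //.
have h0 := v_ge0 n.+1%:R; have h1 := v_ge0 (n`!%:R : K).
case: (boolP (p %| n.+1)%N) => d /=.
  rewrite add1n exprS; apply: ler_pM => //.
  case/dvdnP: d => m ->; rewrite natrM vM.
  have := v_nat m; have := v_ge0 (m%:R : K); have := vp_gt0; nra.
rewrite add0n -[X in _ <= X]mul1r; apply: ler_pM => //; exact: v_nat.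
Qed.
Lemma fact_decay e : 0 < e -> exists N, forall k, (N <= k)%N -> v (k`!%:R : K) < e.
Proof.
move=> e0; set j := Num.Def.archi_bound (e^-1).
have hj : e^-1 < j%:R by apply: archi_boundP; rewrite invr_ge0 ltW.
have p0 : (0 < p)%N by apply: prime_gt0.
exists (j * p)%N => k hk.
apply: le_lt_trans (v_fact_bound k) _.
have jk : (j <= k %/ p)%N by rewrite leq_divRL.
have q0 := vp_gt0; have q1 := vp_lt1.
have -> : (k %/ p = j + (k %/ p - j))%N by rewrite subnKC.
rewrite exprD.
have le1 : v p%:R ^+ (k %/ p - j) <= 1 by apply: exprn_ile1; apply: ltW.
have qj : v p%:R ^+ j < e.
  rewrite vp exprVn -natrX.
  have pj : (j < p ^ j)%N by apply: ltn_expl; apply: p_gt1.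
  rewrite invf_plt ?posrE //; last by rewrite ltr0n expn_gt0 p0.
  by apply: lt_trans hj _; rewrite ltr_nat.
have := exprn_ge0 j (ltW q0); have := exprn_ge0 (k %/ p - j) (ltW q0); nra.
Qed.


Hypothesis cpl : complete v.

Lemma term_bound_gen k (a b : K) : v a <= 1 -> v b <= 1 ->
  v ((-1) ^+ k * k`!%:R * a * b) <= v (k`!%:R : K).
Proof.
move=> ha hb; rewrite !vM v_sign mul1r.
have := v_ge0 a; have := v_ge0 b; have := v_fact_gt0 k.
set f := v (k`!%:R : K) => h1 h2 h3.
have hab : v a * v b <= 1 by nra.
rewrite -mulrA -[X in _ <= X]mulr1; apply: ler_pM; [exact: ltW | exact: mulr_ge0 | by [] | exact: hab].
Qed.
Lemma S_term_bound (y x : K) k : isZp v y -> isZp v x ->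
  v (S_term y (@cst_one K) x k) <= v (k`!%:R : K).
Proof.
move=> hy hx; rewrite /S_term /cst_one mulr1.
exact: term_bound_gen (binom_Zp_le1 k hy) (binom_Zp_le1 k hx).
Qed.
Lemma Sop_has (y x : K) : isZp v y -> isZp v x ->
  has_sum v (S_term y (@cst_one K) x) (Sop v y (@cst_one K) x).
Proof.
move=> hy hx; apply: ksum_has; apply: conv_crit => // e e0.
have [N hN] := fact_decay e0; exists N => k hk.
by apply: le_lt_trans (S_term_bound k hy hx) (hN k hk).
Qed.
Lemma Sop_sym (y x : K) : Sop v y (@cst_one K) x = Sop v x (@cst_one K) y.
Proof.
rewrite /Sop; congr ksum; apply: functional_extensionality => k.
by rewrite /S_term; ring.
Qed.
Lemma Sop_lip (y y' x : K) : isZp v y -> isZp v y' -> isZp v x ->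
  v (Sop v y (@cst_one K) x - Sop v y' (@cst_one K) x) <= v (y - y').
Proof.
move=> hy hy' hx; apply: has_sum_le (has_sumB (Sop_has hy hx) (Sop_has hy' hx)) _ => k.
rewrite /S_term /cst_one.
have -> : (-1) ^+ k * k`!%:R * binom y k * binom x k * 1 -
    (-1) ^+ k * k`!%:R * binom y' k * binom x k * 1
  = (-1) ^+ k * (ff y k - ff y' k) * binom x k by rewrite !ff_binom; ring.
have := ff_lip k (isZp_le1 hy) (isZp_le1 hy').
move: (ff y k - ff y' k) (binom x k) (binom_Zp_le1 k hx) => c b hb hc.
rewrite !vM v_sign mul1r.
have := v_ge0 b; have := v_ge0 c; have := v_ge0 (y - y').
nra.
Qed.

Lemma mahler_ext (c d : nat -> K) x : (forall n, c n = d n) ->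
  mahler_fun v c x = mahler_fun v d x.
Proof. by move=> h; rewrite (functional_extensionality c d h). Qed.
Lemma Sop_mahler (y x : K) : Sop v y (@cst_one K) x = mahler_fun v (cc y) x.
Proof.
rewrite /Sop /mahler_fun; congr ksum; apply: functional_extensionality => k.
by rewrite /S_term /cst_one /cc mulr1.
Qed.
Lemma mahler_nat (c : nat -> K) k : mahler_fun v c k%:R = Fsum c k.
Proof.
rewrite /mahler_fun (ksum_fin (N := k.+1)) // => n hn.
by rewrite binom_nat_big ?mulr0.
Qed.
Lemma mcoef_ext (f g : K -> K) n : (forall k, f k%:R = g k%:R) -> mcoef f n = mcoef g n.
Proof. by move=> h; rewrite !mcoefE /mcn; apply: eq_bigr => i _; rewrite h. Qed.
Lemma mcoef_mahler (c : nat -> K) n : mcoef (mahler_fun v c) n = c n.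
Proof.
rewrite mcoefE -[RHS](mcn_inv c n) /mcn; apply: eq_bigr => i _.
by rewrite mahler_nat.
Qed.
Lemma mahler_cc0 (x : K) : mahler_fun v (cc 0) x = 1.
Proof.
rewrite /mahler_fun (ksum_fin (N := 1)) => [|n hn].
  by rewrite big_ord1 /cc !binom0 expr0 fact0 mulr1n !mulr1.
case: n hn => // n _; by rewrite /cc (binom_nat_big (k := 0)) // !mulr0 mul0r.
Qed.
Lemma mcoef_one n : mcoef (@cst_one K) n = cc 0 n.
Proof.
rewrite -(mcoef_mahler (cc 0)); apply: mcoef_ext => k.
by rewrite mahler_cc0.
Qed.
Lemma mcoef_m1x n : mcoef (@one_minus_x K) n = m1x n.
Proof.
rewrite -(mcoef_mahler m1x); apply: mcoef_ext => k.
rewrite /mahler_fun (ksum_fin (N := 2)) => [|j hj].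
  by rewrite big_ord_recr big_ord1 /= /m1x /= binom0 binom1 /one_minus_x /cst_one /id_fun; ring.
by case: j hj => [|[|j]] //= _; rewrite /m1x /= mul0r.
Qed.
Lemma conv_mahler (phi psi : K -> K) x :
  conv v phi psi x = mahler_fun v (dd (mcoef phi) (mcoef psi)) x.
Proof. by []. Qed.


Lemma dd_ext (a a' b b' : nat -> K) n : (forall k, a k = a' k) -> (forall k, b k = b' k) ->
  dd a b n = dd a' b' n.
Proof. by move=> ha hb; rewrite /dd; apply: eq_bigr => i _; rewrite ha hb. Qed.

Lemma iter_pos n (x : K) :
  iter n (conv v (@one_minus_x K)) (@cst_one K) x = mahler_fun v (cc n%:R) x.
Proof.
elim: n x => [|n IH] x; first by rewrite /= mahler_cc0.
rewrite iterS conv_mahler; apply: mahler_ext => k.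
rewrite -natr1 -Rec1; apply: dd_ext => j; first exact: mcoef_m1x.
by rewrite -(mcoef_mahler (cc n%:R)); apply: mcoef_ext => i; rewrite IH.
Qed.

Lemma Sop_Zp_cont (y : K) : isZp v y -> contZp v (Sop v y (@cst_one K)).
Proof.
move=> hy x e hx e0; exists e => // x' hx' hd.
rewrite Sop_sym [Sop v y _ x]Sop_sym.
by apply: le_lt_trans (Sop_lip hx' hx hy) hd.
Qed.

Lemma star_inv_spec :
  contZp v (star_inv v (@one_minus_x K)) /\
  forall x, isZp v x -> conv v (@one_minus_x K) (star_inv v (@one_minus_x K)) x = cst_one x.
Proof.
have ex : exists psi, contZp v psi /\
    forall x, isZp v x -> conv v (@one_minus_x K) psi x = cst_one x.
  2: exact: (epsilon_spec _ _ ex).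
exists (Sop v (-1) (@cst_one K)); split.
  by apply: Sop_Zp_cont; rewrite -(mulrNz 1 1); apply: isZp_int.
move=> x _; rewrite conv_mahler /cst_one -[RHS](mahler_cc0 x); apply: mahler_ext => k.
rewrite -(addNr 1) -Rec1; apply: dd_ext => j; first exact: mcoef_m1x.
by rewrite -(mcoef_mahler (cc (-1))); apply: mcoef_ext => i; rewrite Sop_mahler.
Qed.

Lemma mcoef_star_inv n : mcoef (star_inv v (@one_minus_x K)) n = cc (-1) n.
Proof.
set q := star_inv v (@one_minus_x K).
have H : forall n, dd m1x (mcoef q) n = cc 0 n.
  move=> m; rewrite -mcoef_one -(mcoef_mahler (dd m1x (mcoef q))).
  apply: mcoef_ext => k; rewrite -(proj2 star_inv_spec k%:R); last exact: (isZp_int k).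
  rewrite conv_mahler; apply: mahler_ext => j; apply: dd_ext => i //.
  by rewrite mcoef_m1x.
elim: n => [|n IH].
  by have := H 0%N; rewrite dd_m1x0 => ->; rewrite /cc !binom0.
have := H n.+1; rewrite dd_m1xS IH.
have := Rec1 (-1) n.+1; rewrite dd_m1xS addNr => <-.
by move=> e; have := congr1 (fun z => z + n.+1%:R * cc (-1) n) e; rewrite /= !subrK.
Qed.

Lemma iter_neg j (x : K) :
  iter j (conv v (star_inv v (@one_minus_x K))) (@cst_one K) x = mahler_fun v (cc (- j%:R)) x.
Proof.
elim: j x => [|j IH] x; first by rewrite /= oppr0 mahler_cc0.
rewrite iterS conv_mahler; apply: mahler_ext => k.
rewrite (_ : - j.+1%:R = - j%:R - 1 :> K); last by rewrite -natr1; ring.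
rewrite -Rec2; apply: dd_ext => i; first exact: mcoef_star_inv.
by rewrite -(mcoef_mahler (cc (- j%:R))); apply: mcoef_ext => l; rewrite IH.
Qed.

Lemma star_pow_Sop (m : int) (x : K) :
  Sop v m%:~R (@cst_one K) x = star_pow v (@one_minus_x K) m x.
Proof.
rewrite Sop_mahler; case: m => n.
  by rewrite /star_pow iter_pos.
by rewrite /star_pow iter_neg NegzE mulrNz.
Qed.


Lemma main_sec :
  (forall y x, isZp v y -> isZp v x -> has_sum v (S_term y (@cst_one K) x) (Sop v y (@cst_one K) x)) /\
  (forall y, isZp v y -> contZp v (Sop v y (@cst_one K))) /\
  contmap v (fun y => Sop v y (@cst_one K)) /\
  (forall (m : int) x, isZp v x ->
     Sop v m%:~R (@cst_one K) x = star_pow v (@one_minus_x K) m x) /\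
  (forall F : K -> K -> K,
     (forall y, isZp v y -> contZp v (F y)) -> contmap v F ->
     (forall (m : int) x, isZp v x -> F m%:~R x = star_pow v (@one_minus_x K) m x) ->
     forall y x, isZp v y -> isZp v x -> F y x = Sop v y (@cst_one K) x).
Proof.
split; first by move=> y x hy hx; apply: Sop_has.
split; first exact: Sop_Zp_cont.
split.
  move=> y0 e hy0 e0; exists e => // y hy hd x hx.
  by apply: ltW; apply: le_lt_trans (Sop_lip hy hy0 hx) hd.
split; first by move=> m x _; apply: star_pow_Sop.
move=> F _ hFm hFi y x hy hx.
apply/eqP; rewrite -subr_eq0; apply/eqP; apply: v_lt_eq0 => e e0.
have e20 : 0 < e / 2%:R by rewrite divr_gt0.
have [d1 d10 hd1] := hFm y (e / 2%:R) hy e20.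
have m0 : 0 < Num.min d1 (e / 2%:R) by rewrite lt_min d10 e20.
have [z hz] := hy _ m0.
move: hz; rewrite lt_min => /andP [hz1 hz2].
have hzi := isZp_int z.
have -> : F y x - Sop v y (@cst_one K) x =
  - (F z%:~R x - F y x) + (Sop v z%:~R (@cst_one K) x - Sop v y (@cst_one K) x).
  rewrite hFi // star_pow_Sop; ring.
apply: vD_lt; rewrite ?vN.
  apply: le_lt_trans (hd1 _ hzi _ x hx) _; first by rewrite vB.
  by rewrite ltr_pdivrMr ?ltr0n // ltr_pMr // ltr1n.
apply: le_lt_trans (Sop_lip hzi hy hx) _; rewrite vB.
apply: lt_trans hz2 _; by rewrite ltr_pdivrMr ?ltr0n // ltr_pMr // ltr1n.
Qed.

End Basic.

Unset Implicit Arguments.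

Theorem proposition6p6 (R : realType) (K : closedFieldType) (v : K -> R) (p : nat) :
  prime p -> is_abs v -> nonarch v -> complete v -> alg_dense v ->
  v p%:R = (p%:R)^-1 ->
  (forall y x, isZp v y -> isZp v x -> has_sum v (S_term y (@cst_one K) x) (Sop v y (@cst_one K) x)) /\
  (forall y, isZp v y -> contZp v (Sop v y (@cst_one K))) /\
  contmap v (fun y => Sop v y (@cst_one K)) /\
  (forall (m : int) x, isZp v x ->
     Sop v m%:~R (@cst_one K) x = star_pow v (@one_minus_x K) m x) /\
  (forall F : K -> K -> K,
     (forall y, isZp v y -> contZp v (F y)) -> contmap v F ->
     (forall (m : int) x, isZp v x -> F m%:~R x = star_pow v (@one_minus_x K) m x) ->
     forall y x, isZp v y -> isZp v x -> F y x = Sop v y (@cst_one K) x).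
Proof.
move=> pP av na cpl _ vp.
exact: (main_sec pP av na vp cpl).
Qed.
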